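(* Let $\mathcal{P}$ be a profile of unrooted phylogenetic trees whose display graph $G(\mathcal{P})$ is connected, and let $F\subseteq E(G(\mathcal{P}))$. Then $F$ is a legal minimal separator of $\mathrm{LG}(\mathcal{P})$ if and only if $F$ is a nice minimal cut of $G(\mathcal{P})$.
   Context: A phylogenetic tree $T$ is an unrooted tree whose leaves are bijectively labeled by a label set $\mathcal{L}(T)$ (leaves identified with labels; internal vertices have degree at least three). A profile $\mathcal{P}=\{T_1,\dots,T_k\}$ is a finite collection of phylogenetic trees; the internal vertices of distinct trees are disjoint, while leaves with the same label are the same vertex. The display graph $G(\mathcal{P})$ has vertex set $\bigcup_i V(T_i)$ and edge set $\bigcup_i E(T_i)$. For a vertex $u$ of an input tree, $\mathrm{Inc}(u)$ is the set of edges of $G(\mathcal{P})$ incident with $u$. $\mathrm{LG}(\mathcal{P})$ is the line graph of $G(\mathcal{P})$ (vertices are the edges of $G(\mathcal{P})$, adjacent iff they share an endpoint). In a graph $G$, for nonadjacent vertices $a,b$, an $a$-$b$ separator is $U\subset V(G)$ with $a,b$ in different components of $G-U$; it is minimal if no proper subset is an $a$-$b$ separator; $U$ is a minimal separator if it is a minimal $a$-$b$ separator for some nonadjacent $a,b$. A minimal separator $F$ of $\mathrm{LG}(\mathcal{P})$ is legal if for every $T\in\mathcal{P}$ all edges of $T$ lying in $F$ share a common endpoint. A cut of a connected graph $G$ is $F\subseteq E(G)$ with $G-F$ (same vertices, edges of $F$ removed) disconnected; minimal if no proper subset is a cut. A cut $F$ of $G(\mathcal{P})$ is legal if for every $T\in\mathcal{P}$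 there is $u\in V(T)$ with $F\cap E(T)\subseteq\mathrm{Inc}(u)$; it is nice if it is legal and every connected component of $G(\mathcal{P})-F$ contains at least one edge. *)

(* Defs.v *)
From mathcomp Require Import all_boot.
Set Implicit Arguments. Unset Strict Implicit. Unset Printing Implicit Defensive.

Definition rconnect (T : finType) (S : {set T}) (adj : rel T) : rel T :=
  connect (fun x y => [&& x \in S, y \in S & adj x y]).

Definition separates (T : finType) (W : {set T}) (adj : rel T) (U : {set T}) (a b : T) :=
  [/\ a \in W :\: U, b \in W :\: U & ~~ rconnect (W :\: U) adj a b].

Definition min_ab_separator (T : finType) (W : {set T}) (adj : rel T) (U : {set T}) (a b : T) :=
  separates W adj U a b /\ (forall U' : {set T}, U' \proper U -> ~ separates W adj U' a b).

Definition minimal_separator (T : finType) (W : {set T}) (adj : rel T) (U : {set T}) :=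
  U \subset W /\
  exists a b, [/\ a \in W, b \in W, ~~ adj a b & min_ab_separator W adj U a b].

Section Trees.
Variable V : finType.

Definition eadj (E : {set {set V}}) : rel V := fun x y => (x != y) && ([set x; y] \in E).

Definition deg (E : {set {set V}}) (v : V) : nat := #|[set e in E | v \in e]|.

Definition is_tree (VT : {set V}) (ET : {set {set V}}) :=
  [/\ VT != set0,
      {in ET, forall e : {set V}, e \subset VT /\ #|e| = 2},
      {in VT &, forall x y, rconnect VT (eadj ET) x y}
    & forall c : seq V, 2 < size c -> uniq c -> ~~ cycle (eadj ET) c].

(* unrooted phylogenetic tree: leaves = vertices of degree <= 1 (identified
   with their labels); internal vertices have degree >= 3 *)
Definition is_phylo_tree (VT : {set V}) (ET : {set {set V}}) :=
  is_tree VT ET /\ {in VT, forall v, deg ET v <= 1 \/ 3 <= deg ET v}.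

(* profile T_0 .. T_(k-1) on the common vertex universe V (= V(G(P))):
   vertices shared by distinct trees are leaves (same label) of both *)
Definition is_profile (k : nat) (VT : 'I_k -> {set V}) (ET : 'I_k -> {set {set V}}) :=
  [/\ forall i, is_phylo_tree (VT i) (ET i),
      forall i j, i != j -> forall v, v \in VT i -> v \in VT j ->
        deg (ET i) v <= 1 /\ deg (ET j) v <= 1
    & forall v : V, exists i, v \in VT i].

Definition disp_edges (k : nat) (ET : 'I_k -> {set {set V}}) : {set {set V}} :=
  \bigcup_(i < k) ET i.

Definition graph_connected (E : {set {set V}}) :=
  forall x y : V, rconnect setT (eadj E) x y.

Definition lg_adj : rel {set V} := fun e f => (e != f) && (e :&: f != set0).

Definition legal_separator (k : nat) (ET : 'I_k -> {set {set V}}) (F : {set {set V}}) :=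
  forall i, exists u : V, forall e, e \in F -> e \in ET i -> u \in e.

Definition is_cut (E F : {set {set V}}) :=
  F \subset E /\ exists x y : V, ~~ rconnect setT (eadj (E :\: F)) x y.

Definition minimal_cut (E F : {set {set V}}) :=
  is_cut E F /\ (forall F' : {set {set V}}, F' \proper F -> ~ is_cut E F').

Definition legal_cut (k : nat) (VT : 'I_k -> {set V}) (ET : 'I_k -> {set {set V}})
  (F : {set {set V}}) :=
  forall i, exists2 u, u \in VT i & forall e, e \in F -> e \in ET i -> u \in e.

(* legal, and every component of G - F contains an edge *)
Definition nice_cut (k : nat) (VT : 'I_k -> {set V}) (ET : 'I_k -> {set {set V}})
  (F : {set {set V}}) :=
  legal_cut VT ET F /\
  forall x : V, exists2 e, e \in disp_edges ET :\: F &
    exists2 y, y \in e & rconnect setT (eadj (disp_edges ET :\: F)) x y.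

End Trees.

(* Main.v *)
Require Import Defs.
From mathcomp Require Import all_boot.
Set Implicit Arguments. Unset Strict Implicit. Unset Printing Implicit Defensive.

Lemma conn_ind (T : finType) (r : rel T) (P : T -> Prop) x y :
  P x -> (forall z w, P z -> r z w -> P w) -> connect r x y -> P y.
Proof.
move=> Px step /connectP[p pth ->]; elim: p x Px pth => //= w p IH x Px /andP[rxw pw].
exact: IH (step _ _ Px rxw) pw.
Qed.

Section Aux.
Variable V : finType.
Implicit Types D : {set {set V}}.

Definition two D := {in D, forall e : {set V}, #|e| = 2}.

Lemma set2C (x y : V) : [set x; y] = [set y; x].
Proof. by apply/setP=> z; rewrite !inE orbC. Qed.

Lemma eadj_sym D : symmetric (eadj D).
Proof. by move=> x y; rewrite /eadj eq_sym set2C. Qed.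

Lemma csym D x y : connect (eadj D) x y = connect (eadj D) y x.
Proof. exact: (sym_connect_sym (eadj_sym D)). Qed.

Lemma conn_mono D D' x y : D \subset D' -> connect (eadj D) x y -> connect (eadj D') x y.
Proof.
move=> sub; apply: connect_sub => u v /andP[nuv uvD]; apply: connect1.
by rewrite /eadj nuv (subsetP sub).
Qed.

Lemma rcT (r : rel V) (x y : V) : rconnect [set: V] r x y = connect r x y.
Proof. by rewrite /rconnect; apply: eq_connect => u v; rewrite !inE. Qed.

Lemma two_eq (e : {set V}) (x y : V) : #|e| = 2 -> x \in e -> y \in e -> x != y -> e = [set x; y].
Proof.
move=> ce xe ye nxy; apply/eqP; rewrite eq_sym eqEcard cards2 nxy ce leqnn andbT.
by apply/subsetP => z; rewrite !inE => /orP[]/eqP->.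
Qed.

Lemma L0 D (e : {set V}) (x y : V) : two D -> e \in D -> x \in e -> y \in e -> connect (eadj D) x y.
Proof.
move=> hD eD xe ye; case: (eqVneq x y) => [->|nxy]; first exact: connect0.
apply: connect1; rewrite /eadj nxy -(two_eq (hD _ eD) xe ye nxy) //.
Qed.

Lemma set2_inv (x y u v : V) : x != y -> [set x; y] = [set u; v] ->
  (x = u /\ y = v) \/ (x = v /\ y = u).
Proof.
move=> nxy E.
have : x \in [set u; v] by rewrite -E !inE eqxx.
have : y \in [set u; v] by rewrite -E !inE eqxx orbT.
rewrite !inE => /orP[]/eqP ey /orP[]/eqP ex; subst; first [by rewrite eqxx in nxy | by auto].
Qed.

Lemma L1a D (e f : {set V}) (x y : V) : two D -> rconnect D (@lg_adj V) e f -> e \in D -> x \in e -> y \in f ->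
  connect (eadj D) x y.
Proof.
move=> hD /connectP[p pth ->]; elim: p e x pth => /= [|g p IH] e x.
  by move=> _ eD xe ye; exact: L0 hD eD xe ye.
case/andP=> /and3P[eD gD /andP[_ /set0Pn[z]]]; rewrite inE => /andP[ze zg] pth _ xe yl.
exact: connect_trans (L0 hD eD xe ze) (IH g z pth gD zg yl).
Qed.

Lemma L1b D (e f : {set V}) (x y : V) : two D -> e \in D -> f \in D -> x \in e -> y \in f ->
  connect (eadj D) x y -> rconnect D (@lg_adj V) e f.
Proof.
move=> hD eD fD xe yf cxy.
pose P z := forall g, g \in D -> z \in g -> rconnect D (@lg_adj V) e g.
have lgstep : forall g h z, g \in D -> h \in D -> z \in g -> z \in h -> rconnect D (@lg_adj V) g h.
  move=> g h z gD hD' zg zh; case: (eqVneq g h) => [->|ngh]; first exact: connect0.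
  apply: connect1; rewrite gD hD' /lg_adj ngh /=; apply/set0Pn; exists z; by rewrite inE zg.
suff : P y by apply.
apply: (conn_ind (P := P) _ _ cxy).
  by move=> g gD xg; exact: (lgstep e g x eD gD xe xg).
move=> z w Pz /andP[nzw hzw] g gD wg.
apply: connect_trans (Pz _ hzw _) (lgstep _ _ w hzw gD _ wg); by rewrite !inE eqxx ?orbT.
Qed.

Lemma L2 D D2 (u v x y : V) :
  (forall g, g \in D2 -> g \in D \/ g = [set u; v]) ->
  connect (eadj D2) x y ->
  let c := connect (eadj D) in
  c x y \/ (c x u /\ c v y) \/ (c x v /\ c u y).
Proof.
move=> hD2 cxy c.
have cT : forall a b d, c a b -> c b d -> c a d by move=> a b d; apply: connect_trans.
have mk : forall w, c x u \/ c x v -> w = u \/ w = v ->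
    c x w \/ (c x u /\ c v w) \/ (c x v /\ c u w).
  by move=> w [h|h] [->|->]; auto; [right; left | right; right]; split=> //; exact: connect0.
apply: (conn_ind (P := fun w => c x w \/ (c x u /\ c v w) \/ (c x v /\ c u w)) _ _ cxy); first by left; exact: connect0.
move=> z w Qz /andP[nzw hzw]; case: (hD2 _ hzw) => [hD|heq].
  have czw : c z w by apply: connect1; rewrite /eadj nzw hD.
  case: Qz => [h|[[h1 h2]|[h1 h2]]]; [left|right;left|right;right]; eauto.
have [[ez ew]|[ez ew]] := set2_inv nzw heq.
  apply: mk; last by auto. subst z.
  by case: Qz => [h|[[h1 h2]|[h1 h2]]]; auto.
apply: mk; last by auto. subst z.
by case: Qz => [h|[[h1 h2]|[h1 h2]]]; auto.
Qed.


Definition HFp (E F : {set {set V}}) (xa xb : V) :=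
  forall f, f \in F -> exists u v, [/\ f = [set u; v],
     connect (eadj (E :\: F)) xa u & connect (eadj (E :\: F)) v xb].

Lemma two_sub (E D : {set {set V}}) : two E -> D \subset E -> two D.
Proof. by move=> hE sub e eD; apply: hE; exact: (subsetP sub). Qed.

Lemma twocomp (E F : {set {set V}}) xa xb :
  (forall x y, connect (eadj E) x y) -> HFp E F xa xb ->
  forall z, connect (eadj (E :\: F)) xa z \/ connect (eadj (E :\: F)) xb z.
Proof.
move=> Gc HF z.
apply: (conn_ind (P := fun z => connect (eadj (E :\: F)) xa z \/ connect (eadj (E :\: F)) xb z) _ _ (Gc xa z)).
  by left; exact: connect0.
move=> z0 w Pz /andP[nzw hzw]; case: (boolP ([set z0; w] \in F)) => hF.
  have [u [v [heq cu cv]]] := HF _ hF.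
  have [[_ ->]|[_ ->]] := set2_inv nzw heq; first by right; rewrite csym.
  by left.
have czw : connect (eadj (E :\: F)) z0 w.
  by apply: connect1; rewrite /eadj nzw !inE hF hzw.
by case: Pz => h; [left|right]; exact: connect_trans h czw.
Qed.

Lemma allconn (E F U : {set {set V}}) xa xb : two E -> F \subset E ->
  (forall x y, connect (eadj E) x y) -> HFp E F xa xb -> U \proper F ->
  forall x y, connect (eadj (E :\: U)) x y.
Proof.
move=> hE FE Gc HF /properP[sub [f fF fnU]] x y.
have [u [v [heq cu cv]]] := HF _ fF.
have mono : E :\: F \subset E :\: U by apply: setDS.
have fE : f \in E by apply: (subsetP FE).
have nuv : u != v.
  by move: (hE _ fE); rewrite heq cards2; case: (u != v).
have cuv : connect (eadj (E :\: U)) u v.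
  by apply: connect1; rewrite /eadj nuv -heq !inE fnU fE.
have cab : connect (eadj (E :\: U)) xa xb.
  apply: connect_trans (conn_mono mono cu) _; apply: connect_trans cuv (conn_mono mono cv).
have toa : forall z, connect (eadj (E :\: U)) xa z.
  move=> z; case: (twocomp Gc HF z) => h; first exact: conn_mono mono h.
  exact: connect_trans cab (conn_mono mono h).
by apply: connect_trans (toa y); rewrite csym; apply: toa.
Qed.

Lemma HFlem (E F : {set {set V}}) f x0 y0 : two E -> F \subset E -> f \in F ->
  connect (eadj (E :\: (F :\ f))) x0 y0 -> ~~ connect (eadj (E :\: F)) x0 y0 ->
  exists u v, [/\ f = [set u; v],
     connect (eadj (E :\: F)) x0 u & connect (eadj (E :\: F)) v y0].
Proof.
move=> hE FE fF c1 nc.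
have fE : f \in E by apply: (subsetP FE).
have /cards2P[u [v [nuv heq]]] : #|f| == 2 by rewrite hE.
have hD2 : forall g, g \in E :\: (F :\ f) -> g \in E :\: F \/ g = [set u; v].
  move=> g; rewrite !inE negb_and negbK => /andP[/orP[/eqP->|gF] gE]; first by right.
  by left; rewrite gF gE.
case: (L2 hD2 c1) => [h|[[h1 h2]|[h1 h2]]]; first by rewrite h in nc.
  by exists u, v.
by exists v, u; rewrite set2C.
Qed.

End Aux.

Theorem lemma2 (V : finType) (k : nat) (VT : 'I_k -> {set V})
  (ET : 'I_k -> {set {set V}}) (F : {set {set V}}) :
  is_profile VT ET ->
  graph_connected (disp_edges ET) ->
  F \subset disp_edges ET ->
  (minimal_separator (disp_edges ET) (@lg_adj V) F /\ legal_separator ET F) <->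
  (minimal_cut (disp_edges ET) F /\ nice_cut VT ET F).
Proof.
move=> [Htree _ Hcov] Gconn FsubE.
have hE : two (disp_edges ET).
  move=> e /bigcupP[i _ eET]; case: (Htree i) => [[_ H _ _] _]; by case: (H e eET).
have Gc : forall x y, connect (eadj (disp_edges ET)) x y.
  by move=> x y; rewrite -rcT; exact: Gconn.
have legal_iff : legal_separator ET F -> legal_cut VT ET F.
  move=> hl i; case: (hl i) => u hu.
  case: (pickP (fun e => (e \in F) && (e \in ET i))) => [e /andP[eF eT]|none].
    exists u => //; case: (Htree i) => [[_ H _ _] _]; case: (H e eT) => sub _.
    exact: (subsetP sub) _ (hu e eF eT).
  case: (Htree i) => [[ne _ _ _] _]; case/set0Pn: ne => v vV; exists v => // e eF eT.
  by move: (none e); rewrite eF eT.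
have legal_back : legal_cut VT ET F -> legal_separator ET F.
  by move=> hl i; case: (hl i) => u _ hu; exists u.
set E := disp_edges ET in hE Gc FsubE *.
have hEF : two (E :\: F) by apply: two_sub hE (subsetDl _ _).
have subU : forall U : {set {set V}}, U \subset F -> E :\: F \subset E :\: U by move=> U h; apply: setDS.
split.
  case=> [[_ [a [b [aE bE nab [[aEF bEF nsep] hmin]]]]] hleg].
  have [xa xaa] : exists xa, xa \in a by apply/set0Pn; rewrite -card_gt0 hE.
  have [xb xbb] : exists xb, xb \in b by apply/set0Pn; rewrite -card_gt0 hE.
  have nc : ~~ connect (eadj (E :\: F)) xa xb.
    apply/negP => h; move/negP: nsep; apply; exact: L1b hEF aEF bEF xaa xbb h.
  have HF : HFp E F xa xb.
    move=> f fF; apply: (HFlem hE FsubE fF _ nc).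
    have sU : F :\ f \subset F by apply: subD1set.
    have : rconnect (E :\: (F :\ f)) (@lg_adj V) a b.
      apply/negPn/negP => h; apply: (hmin _ (properD1 fF)); split => //.
        exact: (subsetP (subU _ sU)).
      exact: (subsetP (subU _ sU)).
    move=> h; apply: L1a h _ xaa xbb.
      apply: two_sub hE (subsetDl _ _).
    exact: (subsetP (subU _ sU)).
  split.
    split; first by split=> //; exists xa, xb; rewrite rcT.
    move=> F' pF' [_ [x [y ncxy]]]; move/negP: ncxy; apply.
    by rewrite rcT; apply: (allconn hE FsubE Gc HF pF').
  split; first exact: legal_iff.
  move=> x; case: (twocomp Gc HF x) => h.
    by exists a => //; exists xa => //; rewrite rcT csym.
  by exists b => //; exists xb => //; rewrite rcT csym.
case=> [[[_ [x0 [y0 nc]]] hmin] [hlc hcomp]]; rewrite rcT in nc.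
have HF : HFp E F x0 y0.
  move=> f fF; apply: (HFlem hE FsubE fF _ nc).
  apply/negPn/negP => h; apply: (hmin _ (properD1 fF)); split.
    exact: subset_trans (subD1set F f) FsubE.
  by exists x0, y0; rewrite rcT.
have [a aEF [ya yaa cxa]] := hcomp x0.
have [b bEF [yb ybb cyb]] := hcomp y0.
rewrite rcT in cxa; rewrite rcT in cyb.
split; last exact: legal_back.
split=> //; exists a, b; split.
- by move: aEF; rewrite inE => /andP[].
- by move: bEF; rewrite inE => /andP[].
- apply/negP => /andP[_ /set0Pn[z]]; rewrite inE => /andP[za zb].
  move/negP: nc; apply.
  apply: connect_trans cxa _; apply: connect_trans (L0 hEF aEF yaa za) _.
  apply: connect_trans (L0 hEF bEF zb ybb) _; by rewrite csym; exact: cyb.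
split.
  split=> //; apply/negP => h; move/negP: nc; apply.
  have := L1a hEF h aEF yaa ybb => cab.
  apply: connect_trans cxa _; apply: connect_trans cab _; by rewrite csym; exact: cyb.
move=> U pU [aU bU ns]; move/negP: ns; apply.
have hU : two (E :\: U) by apply: two_sub hE (subsetDl _ _).
apply: L1b hU aU bU yaa ybb _.
exact: (allconn hE FsubE Gc HF pU).
Qed.
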